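(* Suppose Assumptions A1, A2 (SDSD) and A3 hold for the steady state $(x^s,u^s)$ and discount factor $\gamma\in(0,1)$. Define $W(x):=V_\star^\gamma(x)+\lambda(x)$, where $\lambda$ and $\rho\in\mathcal{K}$ are the functions from Assumption A2. Then, for all $x_0\in\mathbb{X}_0$, $W$ is a Lyapunov function for the closed-loop system $x_{k+1}=f(x_k,\pi_\star^\gamma(x_k))$: (a) $W(x)\ge \rho(\|x-x^s\|)$; (b) there exists $\alpha\in\mathcal{K}$ with $W(x)\le \alpha(\|x-x^s\|)$; (c) $W(f(x,\pi_\star^\gamma(x)))-W(x)\le -\rho(\|x-x^s\|)$; and the closed-loop system under the optimal policy $\pi_\star^\gamma$ (equivalently, under an optimal policy of the modified problem with stage cost $\hat L^\gamma$) is asymptotically stable at $x^s$, i.e. there is $\beta\in\mathcal{KL}$ with $\|x_k^{\pi_\star^\gamma}-x^s\|\le\beta(\|x_0-x^s\|,k)$ for all $k\ge0$ and all $x_0\in\mathbb{X}_0$.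
   Context: Setting: discrete-time system $x_+=f(x,u)$ with $x\in\mathbb{R}^{n_x}$, $u\in\mathbb{R}^{n_u}$, stage cost $L(x,u)$, constraint set $\mathbb{Z}:=\{(x,u): h(x,u)\le 0\}$, with the convention $L(x,u)=\infty$ for $(x,u)\notin\mathbb{Z}$, and discount factor $\gamma\in(0,1)$. For a policy $\pi$ (a map $x\mapsto u$) the closed-loop trajectory is $x_{k+1}^\pi=f(x_k^\pi,\pi(x_k^\pi))$, $x_0^\pi=x_0$. $\mathbb{X}_0:=\{x_0:\exists\pi \text{ with } h(x_k^\pi,\pi(x_k^\pi))\le0\ \forall k\ge0\}$ and $\Pi:=\{\pi: h(x_k^\pi,\pi(x_k^\pi))\le 0\ \forall x_0\in\mathbb{X}_0,\forall k\ge 0\}$. The optimal value function is $V_\star^\gamma(x_0):=\min_{\pi\in\Pi}\sum_{k=0}^\infty\gamma^kL(x_k^\pi,\pi(x_k^\pi))$ and $\pi_\star^\gamma$ denotes an optimal policy; it satisfies the Bellman equation $V_\star^\gamma(x)=\min_{\pi\in\Pi}L(x,\pi(x))+\gamma V_\star^\gamma(f(x,\pi(x)))$. $(x^s,u^s)$ is a steady state, $x^s=f(x^s,u^s)$, normalized so that $L(x^s,u^s)=0$. Assumption A1: $\mathbb{Z}$ and $\mathbb{X}_0$ are compact and $|L(x,u)|<\infty$ for all $(x,u)\in\mathbb{Z}$. Assumption A2 (Strong Discounted Strict Dissipativity, SDSD): there exist a function $\lambda$, continuous at $x^s$, bounded on bounded sets, with $\lambda(x^s)=0$, and $\rho\in\mathcal{K}$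 such that for all $(x,u)\in\mathbb{Z}$: (i) $L(x,u)+\lambda(x)-\gamma\lambda(f(x,u))\ge\rho(\|x-x^s\|)$; (ii) $L(x,u)+\lambda(x)-\lambda(f(x,u))+(\gamma-1)V_\star^\gamma(f(x,u))\ge\rho(\|x-x^s\|)$. Assumption A3: $V_\star^\gamma$ is continuous at $x^s$ and bounded on $\mathbb{X}_0$. Modified cost: $\hat L^\gamma(x,u):=L(x,u)+\lambda(x)-\gamma\lambda(f(x,u))$; it is known (for bounded $\lambda$) that the discounted problem with stage cost $\hat L^\gamma$ has the same optimal policies as the original one and optimal value $V_\star^\gamma+\lambda$. Comparison functions: $\mathcal{K}$ = continuous, strictly increasing $\alpha:\mathbb{R}_{\ge0}\to\mathbb{R}_{\ge0}$ with $\alpha(0)=0$; $\mathcal{L}$ = continuous strictly decreasing functions tending to $0$; $\mathcal{KL}$ = continuous $\beta(s,t)$ with $\beta(\cdot,t)\in\mathcal{K}$ and $\beta(s,\cdot)\in\mathcal{L}$. *)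

(* Defs.v *)
From HB Require Import structures.
From mathcomp Require Import all_boot all_order all_algebra.
From mathcomp Require Import all_classical all_reals all_analysis.
Set Implicit Arguments. Unset Strict Implicit. Unset Printing Implicit Defensive.
Import Order.TTheory GRing.Theory Num.Theory.
Import numFieldNormedType.Exports.
Local Open Scope classical_set_scope.
Local Open Scope ring_scope.

Section Defs.
Variables (R : realType) (nx nu nh : nat).
Local Notation X := 'rV[R]_nx.
Local Notation U := 'rV[R]_nu.

Definition traj (f : X -> U -> X) (pi : X -> U) (x0 : X) (k : nat) : X :=
  iter k (fun x => f x (pi x)) x0.

Definition Zset (h : X -> U -> 'rV[R]_nh) : set (X * U) :=
  [set z | forall i, h z.1 z.2 0 i <= 0].

Definition feasible (f : X -> U -> X) (h : X -> U -> 'rV[R]_nh)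
  (pi : X -> U) (x0 : X) : Prop :=
  forall k, Zset h (traj f pi x0 k, pi (traj f pi x0 k)).

Definition X0set f h : set X := [set x0 | exists pi, feasible f h pi x0].

Definition Piset f h : set (X -> U) :=
  [set pi | forall x0, X0set f h x0 -> feasible f h pi x0].

(* discounted cost of policy pi from x0; L takes values in \bar R
   (convention L = +oo outside Z).  The infinite sum is the limit of the
   partial sums; a non-convergent series is assigned the value +oo. *)
Definition dcost (gamma : R) (f : X -> U -> X) (L : X -> U -> \bar R)
  (pi : X -> U) (x0 : X) : \bar R :=
  let s := fun n : nat =>
    (\sum_(0 <= k < n) ((gamma ^+ k)%:E * L (traj f pi x0 k) (pi (traj f pi x0 k))))%E in
  if `[< cvgn s >] then limn s else +oo%E.

Definition Vstar (gamma : R) f h L (x0 : X) : \bar R :=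
  ereal_inf [set dcost gamma f L pi x0 | pi in Piset f h].

End Defs.

(* comparison functions on R_{>=0}, represented as functions R -> R *)
Definition classK {R : realType} (a : R -> R) : Prop :=
  [/\ a 0 = 0,
      {within [set s : R | 0 <= s], continuous a} &
      (forall s t : R, 0 <= s -> s < t -> a s < a t)].

Definition classL {R : realType} (g : R -> R) : Prop :=
  [/\ {within [set t : R | 0 <= t], continuous g},
      (forall s t : R, 0 <= s -> s < t -> g t < g s) &
      (g t @[t --> +oo] --> (0 : R))].

Definition classKL {R : realType} (b : R -> R -> R) : Prop :=
  [/\ {within [set p : R * R | 0 <= p.1 /\ 0 <= p.2],
        continuous (fun p : R * R => b p.1 p.2)},
      (forall t : R, 0 <= t -> classK (fun s => b s t)) &
      (forall s : R, 0 < s -> classL (b s))].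

(* Main.v *)
Require Import Defs.
From HB Require Import structures.
From mathcomp Require Import all_boot all_order all_algebra.
From mathcomp Require Import all_classical all_reals all_analysis.
From mathcomp Require Import ring lra.
Import Order.TTheory GRing.Theory Num.Theory.
Import numFieldNormedType.Exports.
Local Open Scope classical_set_scope.
Local Open Scope ring_scope.

Lemma minr1_lip {R : realType} (a b : R) : `|Num.min 1 a - Num.min 1 b| <= `|a - b|.
Proof.
case: (lerP 1 a) => ha; case: (lerP 1 b) => hb.
- by rewrite subrr normr0.
- rewrite !ger0_norm; lra.
- rewrite !ler0_norm; lra.
- by [].
Qed.

Lemma expN_lip {R : realType} (a b : R) : 0 <= a -> 0 <= b -> `|expR (- a) - expR (- b)| <= `|a - b|.
Proof.
wlog ab : a b / a <= b.
  move=> H a0 b0.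
  have [h|h] : a <= b \/ b <= a by case: (lerP a b) => h; [left|right; apply: ltW].
    exact: H.
  have := H b a h b0 a0. by rewrite distrC (distrC b).
move=> a0 b0.
have e : expR (- b) = expR (- a) * expR (a - b) by rewrite -expRD; congr expR; lra.
have h1 := expR_ge1Dx (a - b).
have h2 : expR (- a) <= 1 by rewrite expR_le1; lra.
have h3 : expR (a - b) <= 1 by rewrite expR_le1; lra.
have h4 := expR_gt0 (- a).
rewrite e ger0_norm; last by rewrite subr_ge0 ler_piMr // ltW.
rewrite ler0_norm; last lra.
have : expR (- a) * (1 - expR (a - b)) <= 1 * (1 - expR (a - b)).
  by apply: ler_wpM2r; lra.
nra.
Qed.

Definition kterm {R : realType} (s t s' : R) (k : nat) (d : R) : R :=
  d * Num.min 1 (s / s') * expR (- Num.max (t - k%:R) 0).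
Definition kset {R : realType} (P : R -> nat -> R -> Prop) (s t : R) : set R :=
  [set y | y = 0 \/ exists s' k d, P s' k d /\ y = kterm s t s' k d].
Definition kb0 {R : realType} (P : R -> nat -> R -> Prop) (s t : R) : R :=
  sup (kset P s t).
Definition kgood {R : realType} (P : R -> nat -> R -> Prop) (B : R) :=
  0 <= B /\ forall s k d, P s k d -> [/\ 0 <= s, 0 <= d & d <= B].

Lemma kE_bnd {R : realType} (t : R) (k : nat) :
  0 < expR (- Num.max (t - k%:R) 0) /\ expR (- Num.max (t - k%:R) 0) <= 1.
Proof.
split; first exact: expR_gt0.
rewrite expR_le1 oppr_le0; by rewrite le_max lexx orbT.
Qed.

Lemma kmin_bnd {R : realType} {s s' : R} : 0 <= s -> 0 <= s' ->
  0 <= Num.min 1 (s / s') <= 1.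
Proof.
move=> s0 s'0; rewrite ge_min lexx /= andbT le_min ler01 /=.
exact: divr_ge0.
Qed.

Lemma kterm_le {R : realType} (s t s' : R) k d : 0 <= d -> kterm s t s' k d <= d.
Proof.
move=> d0; rewrite /kterm; have [e0 e1] := kE_bnd t k.
have m1 : Num.min 1 (s / s') <= 1 by rewrite ge_min lexx.
set m := Num.min _ _ in m1 *; set e := expR _ in e0 e1 *.
have : d * e * m <= d * e * 1 by apply: ler_wpM2l => //; apply: mulr_ge0 => //; exact: ltW.
have : d * e <= d * 1 by apply: ler_wpM2l.
nra.
Qed.

Lemma kterm_ge0 {R : realType} (s t s' : R) k d : 0 <= s -> 0 <= s' -> 0 <= d ->
  0 <= kterm s t s' k d.
Proof.
move=> s0 s'0 d0; rewrite /kterm; have [e0 _] := kE_bnd t k.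
have /andP[m0 _] := kmin_bnd s0 s'0.
by rewrite mulr_ge0 ?mulr_ge0 // ltW.
Qed.

Lemma kset_ub {R : realType} {P} {B : R} {s t} : kgood P B ->
  forall y, kset P s t y -> y <= B.
Proof.
move=> [B0 HP] y [->//|[s' [k [d [Pd ->]]]]].
have [_ d0 dB] := HP _ _ _ Pd.
exact: le_trans (kterm_le s t s' k d d0) dB.
Qed.

Lemma kb0_ge {R : realType} {P} {B : R} {s t y} : kgood P B ->
  kset P s t y -> y <= kb0 P s t.
Proof.
move=> HB Sy; apply: (ub_le_sup _ Sy).
by exists B => z; apply: (kset_ub HB).
Qed.

Lemma kb0_le {R : realType} P (s t c : R) :
  (forall y, kset P s t y -> y <= c) -> kb0 P s t <= c.
Proof. by move=> H; apply: ge_sup => //; exists 0; left. Qed.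

Lemma kb0_ge0 {R : realType} {P} {B : R} s t : kgood P B -> 0 <= kb0 P s t.
Proof. by move=> HB; apply: (kb0_ge HB); left. Qed.

Lemma maxr0_lip {R : realType} (a b : R) : `|Num.max a 0 - Num.max b 0| <= `|a - b|.
Proof.
case: (lerP 0 a) => ha; case: (lerP 0 b) => hb.
- by [].
- rewrite !ger0_norm; lra.
- rewrite distrC (distrC a) !ger0_norm; lra.
- by rewrite subrr normr0.
Qed.

Lemma kA_lip {R : realType} {m s1 s2 s' : R} : 0 < m -> m <= s1 -> m <= s2 -> 0 <= s' ->
  `|Num.min 1 (s1 / s') - Num.min 1 (s2 / s')| <= `|s1 - s2| / m.
Proof.
move=> m0 ms1 ms2 s'0.
have hpos : 0 <= `|s1 - s2| / m by rewrite divr_ge0 // ltW.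
have [->|s'p] : s' = 0 \/ 0 < s' by case: (lerP s' 0) => h; [left; apply/eqP; rewrite eq_le h s'0|right].
  by rewrite invr0 !mulr0 subrr normr0.
case: (lerP s' m) => hs'.
  have h1 : 1 <= s1 / s' by rewrite ler_pdivlMr // mul1r; apply: le_trans ms1.
  have h2 : 1 <= s2 / s' by rewrite ler_pdivlMr // mul1r; apply: le_trans ms2.
  by rewrite (min_l h1) (min_l h2) subrr normr0.
apply: le_trans (minr1_lip _ _) _.
rewrite -mulrBl normrM (gtr0_norm (x := s'^-1)) ?invr_gt0 //.
apply: ler_wpM2l; first exact: normr_ge0.
by rewrite lef_pV2 ?posrE // ltW.
Qed.

Lemma kE_lip {R : realType} (t1 t2 : R) k :
  `|expR (- Num.max (t1 - k%:R) 0) - expR (- Num.max (t2 - k%:R) 0)| <= `|t1 - t2|.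
Proof.
have ha : 0 <= Num.max (t1 - k%:R) 0 by rewrite le_max lexx orbT.
have hb : 0 <= Num.max (t2 - k%:R) 0 by rewrite le_max lexx orbT.
apply: le_trans (expN_lip _ _ ha hb) _.
apply: le_trans (maxr0_lip _ _) _.
by have -> : t1 - k%:R - (t2 - k%:R) = t1 - t2 by ring.
Qed.

Lemma kterm_lip {R : realType} (B m s1 s2 t1 t2 s' : R) k d :
  0 <= d -> d <= B -> 0 <= s' -> 0 < m -> m <= s1 -> m <= s2 ->
  kterm s1 t1 s' k d - kterm s2 t2 s' k d <= B * (`|t1 - t2| + `|s1 - s2| / m).
Proof.
move=> d0 dB s'0 m0 ms1 ms2; rewrite /kterm.
have hA := kA_lip m0 ms1 ms2 s'0.
have hE := kE_lip t1 t2 k.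
have /andP[A10 A11] := kmin_bnd (le_trans (ltW m0) ms1) s'0.
have /andP[A20 A21] := kmin_bnd (le_trans (ltW m0) ms2) s'0.
have [E10 E11] := kE_bnd t1 k; have [E20 E21] := kE_bnd t2 k.
set A1 := Num.min 1 _ in hA A10 A11 *; set A2 := Num.min 1 _ in hA A20 A21 *.
set E1 := expR _ in hE E10 E11 *; set E2 := expR _ in hE E20 E21 *.
set a := `|s1 - s2| / m in hA *; set b := `|t1 - t2| in hE *.
have h1 : A1 * (E1 - E2) <= b.
  apply: le_trans (ler_norm _) _; rewrite normrM.
  apply: le_trans (_ : 1 * b <= b); last by rewrite mul1r.
  apply: ler_pM. all: try exact: normr_ge0. all: try by []. by rewrite ger0_norm.
have h2 : E2 * (A1 - A2) <= a.
  apply: le_trans (ler_norm _) _; rewrite normrM.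
  apply: le_trans (_ : 1 * a <= a); last by rewrite mul1r.
  apply: ler_pM. all: try exact: normr_ge0. all: try by []. by rewrite ger0_norm // ltW.
have e : d * A1 * E1 - d * A2 * E2 = d * (A1 * (E1 - E2) + E2 * (A1 - A2)) by ring.
rewrite e.
have hab : 0 <= b + a by apply: addr_ge0; [exact: normr_ge0|rewrite /a divr_ge0 // ?ltW].
apply: le_trans (_ : d * (b + a) <= _).
  by apply: ler_wpM2l => //; apply: lerD.
by apply: ler_wpM2r.
Qed.

Lemma kterm_mono_s {R : realType} (s1 s2 t s' : R) k d :
  0 <= s1 -> s1 <= s2 -> 0 <= s' -> 0 <= d -> kterm s1 t s' k d <= kterm s2 t s' k d.
Proof.
move=> s10 s12 s'0 d0; rewrite /kterm.
have [E0 _] := kE_bnd t k.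
apply: ler_wpM2r; first exact: ltW.
apply: ler_wpM2l => //.
rewrite le_min ge_min lexx /= ge_min.
apply/orP; right; apply: ler_wpM2r => //; by rewrite invr_ge0.
Qed.

Lemma kterm_mono_t {R : realType} (s t1 t2 s' : R) k d :
  0 <= s -> t1 <= t2 -> 0 <= s' -> 0 <= d -> kterm s t2 s' k d <= kterm s t1 s' k d.
Proof.
move=> s0 t12 s'0 d0; rewrite /kterm.
have /andP[A0 _] := kmin_bnd s0 s'0.
apply: ler_wpM2l; first exact: mulr_ge0.
rewrite ler_expR lerN2 ge_max; apply/andP; split.
  by rewrite le_max lerD2r t12.
by rewrite le_max lexx orbT.
Qed.

Lemma kb0_s0 {R : realType} {P} {B : R} t : kgood P B -> kb0 P 0 t = 0.
Proof.
move=> HB; apply/eqP; rewrite eq_le (kb0_ge0 _ _ HB) andbT.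
apply: kb0_le => y [->//|[s' [k [d [_ ->]]]]].
by rewrite /kterm mul0r min_r ?ler01 // mulr0 mul0r.
Qed.

Lemma kb0_mono_s {R : realType} {P} {B : R} (s1 s2 t : R) : kgood P B ->
  0 <= s1 -> s1 <= s2 -> kb0 P s1 t <= kb0 P s2 t.
Proof.
move=> HB s10 s12; apply: kb0_le => y [->|[s' [k [d [Pd ->]]]]].
  exact: kb0_ge0 HB.
have [s'0 d0 _] := HB.2 _ _ _ Pd.
apply: le_trans (@kterm_mono_s _ s1 s2 t s' k d s10 s12 s'0 d0) _.
by apply: (kb0_ge HB); right; exists s', k, d.
Qed.

Lemma kb0_mono_t {R : realType} {P} {B : R} (s t1 t2 : R) : kgood P B ->
  0 <= s -> t1 <= t2 -> kb0 P s t2 <= kb0 P s t1.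
Proof.
move=> HB s0 t12; apply: kb0_le => y [->|[s' [k [d [Pd ->]]]]].
  exact: kb0_ge0 HB.
have [s'0 d0 _] := HB.2 _ _ _ Pd.
apply: le_trans (@kterm_mono_t _ s t1 t2 s' k d s0 t12 s'0 d0) _.
by apply: (kb0_ge HB); right; exists s', k, d.
Qed.

Lemma kb0_lip {R : realType} {P} {B : R} (m s1 s2 t1 t2 : R) : kgood P B ->
  0 < m -> m <= s1 -> m <= s2 ->
  kb0 P s1 t1 <= kb0 P s2 t2 + B * (`|t1 - t2| + `|s1 - s2| / m).
Proof.
move=> HB m0 ms1 ms2.
have c0 : 0 <= B * (`|t1 - t2| + `|s1 - s2| / m).
  by apply: mulr_ge0; [exact: HB.1|apply: addr_ge0; [exact: normr_ge0|rewrite divr_ge0 // ltW]].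
apply: kb0_le => y [->|[s' [k [d [Pd ->]]]]].
  by apply: addr_ge0 => //; exact: kb0_ge0 HB.
have [s'0 d0 dB] := HB.2 _ _ _ Pd.
have := @kterm_lip _ B m s1 s2 t1 t2 s' k d d0 dB s'0 m0 ms1 ms2.
have : kterm s2 t2 s' k d <= kb0 P s2 t2 by apply: (kb0_ge HB); right; exists s', k, d.
lra.
Qed.

Lemma kterm_le_dE {R : realType} (s t s' : R) k d : 0 <= d ->
  kterm s t s' k d <= d * expR (- Num.max (t - k%:R) 0).
Proof.
move=> d0; rewrite /kterm; have [e0 _] := kE_bnd t k.
have m1 : Num.min 1 (s / s') <= 1 by rewrite ge_min lexx.
set m := Num.min _ _ in m1 *; set E := expR _ in e0 *.
have := mulr_ge0 d0 (ltW e0).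
nra.
Qed.

Lemma kterm_le_dA {R : realType} (s t s' : R) k d : 0 <= s -> 0 <= s' -> 0 <= d ->
  kterm s t s' k d <= d * Num.min 1 (s / s').
Proof.
move=> s0 s'0 d0; rewrite /kterm; have [_ e1] := kE_bnd t k.
have /andP[m0 _] := kmin_bnd s0 s'0.
by rewrite -[leRHS]mulr1 ler_wpM2l // mulr_ge0.
Qed.

Lemma kb0_small {R : realType} {P} {B : R} : kgood P B ->
  (forall e, 0 < e -> exists2 dl, 0 < dl & forall s k d, P s k d -> s <= dl -> d <= e) ->
  forall e, 0 < e -> exists2 eta, 0 < eta & forall s t, 0 <= s -> s <= eta -> kb0 P s t <= e.
Proof.
move=> HB Hst e e0; have [dl dl0 Hdl] := Hst e e0.
have B0 := HB.1.
have B1 : 0 < B + 1 by lra.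
exists (e * dl / (B + 1)); first by rewrite divr_gt0 // mulr_gt0.
move=> s t s0 seta; apply: kb0_le => y [->|[s' [k [d [Pd ->]]]]]; first exact: ltW.
have [s'0 d0 dB] := HB.2 _ _ _ Pd.
case: (boolP (s' <= dl)) => hs'; last rewrite -ltNge in hs'.
  exact: le_trans (kterm_le s t s' k d d0) (Hdl _ _ _ Pd hs').
apply: le_trans (@kterm_le_dA _ s t s' k d s0 s'0 d0) _.
have s'p : 0 < s' by apply: lt_trans hs'.
have q0 : 0 <= s / s' by rewrite divr_ge0.
have hq : s / s' <= e / (B + 1).
  apply: le_trans (_ : s / dl <= _).
    by rewrite ler_wpM2l // lef_pV2 ?posrE // ltW.
  apply: le_trans (_ : (e * dl / (B + 1)) / dl <= _).
    by rewrite ler_wpM2r // invr_ge0 ltW.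
  rewrite le_eqVlt; apply/orP; left; apply/eqP; field.
  by apply/andP; split; apply/negP => /eqP h; move: dl0 B1; rewrite h; lra.
have hq2 : s / s' * (B + 1) <= e.
  by move: hq; rewrite ler_pdivlMr.
have m1 : Num.min 1 (s / s') <= s / s' by rewrite ge_min lexx orbT.
have m0 : 0 <= Num.min 1 (s / s') by have /andP[] := kmin_bnd s0 s'0.
nra.
Qed.

Lemma kb0_large {R : realType} {P} {B : R} : kgood P B ->
  (forall e, 0 < e -> exists T : nat, forall s k d, P s k d -> (T <= k)%N -> d <= e) ->
  forall e, 0 < e -> exists M : R, forall s t, 0 <= s -> M <= t -> kb0 P s t <= e.
Proof.
move=> HB Hdec e e0; have [T HT] := Hdec e e0.
have B0 := HB.1.
exists (T%:R + B / e) => s t s0 tM.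
apply: kb0_le => y [->|[s' [k [d [Pd ->]]]]]; first exact: ltW.
have [s'0 d0 dB] := HB.2 _ _ _ Pd.
case: (leqP T k) => hk.
  exact: le_trans (kterm_le _ _ _ _ _ d0) (HT _ _ _ Pd hk).
apply: le_trans (@kterm_le_dE _ s t s' k d d0) _.
have kT : k%:R <= T%:R :> R by rewrite ler_nat ltnW.
have Be0 : 0 <= B / e by rewrite divr_ge0 // ltW.
set x := t - T%:R.
have hx : B / e <= x by rewrite /x; lra.
have hE : expR (- Num.max (t - k%:R) 0) <= expR (- x).
  by rewrite ler_expR lerN2 le_max; apply/orP; left; rewrite /x; lra.
have hEx : B * expR (- x) <= e.
  rewrite expRN ler_pdivrMr ?expR_gt0 //.
  have := expR_ge1Dx x.
  have : B <= x * e by move: hx; rewrite ler_pdivrMr.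
  nra.
have E0 := expR_gt0 (- Num.max (t - k%:R) 0).
have Ex0 := expR_gt0 (- x).
nra.
Qed.

Definition kbeta {R : realType} (P : R -> nat -> R -> Prop) (s t : R) : R :=
  kb0 P s t + s * expR (- t).

Lemma kbeta_ge0 {R : realType} {P} {B : R} s t : kgood P B -> 0 <= s -> 0 <= kbeta P s t.
Proof.
move=> HB s0; rewrite /kbeta; apply: addr_ge0; first exact: kb0_ge0 HB.
by apply: mulr_ge0 => //; exact: expR_ge0.
Qed.

Lemma kbeta_cont {R : realType} {P} {B : R} : kgood P B ->
  (forall e, 0 < e -> exists2 dl, 0 < dl & forall s k d, P s k d -> s <= dl -> d <= e) ->
  forall s0 t0, 0 <= s0 -> 0 <= t0 -> forall e, 0 < e -> exists2 r, 0 < r &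
    forall s t, 0 <= s -> 0 <= t -> `|s - s0| < r -> `|t - t0| < r ->
      `|kbeta P s t - kbeta P s0 t0| < e.
Proof.
move=> HB Hst s0 t0 s00 t00 e e0.
have B0 := HB.1.
have [->|s0p] : s0 = 0 \/ 0 < s0.
  by case: (boolP (s0 <= 0)) => h; [left; apply/eqP; rewrite eq_le h s00|right; rewrite ltNge].
  have e20 : 0 < e / 2 by rewrite divr_gt0.
  have [eta eta0 Heta] := kb0_small HB Hst (e / 2) e20.
  exists (Num.min eta (e / 2)); first by rewrite lt_min eta0 e20.
  move=> s t s0' t0' hs _.
  rewrite subr0 ger0_norm // in hs.
  move: hs; rewrite lt_min => /andP[hs1 hs2].
  rewrite /kbeta (kb0_s0 _ HB) mul0r addr0 subr0 ger0_norm; last first.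
    by apply: addr_ge0; [exact: kb0_ge0 HB|apply: mulr_ge0 => //; exact: expR_ge0].
  have h1 := Heta s t s0' (ltW hs1).
  have h2 : expR (- t) <= 1 by rewrite expR_le1; lra.
  have : s * expR (- t) <= s * 1 by apply: ler_wpM2l.
  lra.
set K := B + s0 + 2 * B / s0 + 1.
have K0 : 0 <= K.
  rewrite /K; have : 0 <= 2 * B / s0 by rewrite divr_ge0 // ?mulr_ge0 // ltW.
  lra.
have K1 : 0 < K + 1 by lra.
have s020 : 0 < s0 / 2 by rewrite divr_gt0.
exists (Num.min (s0 / 2) (e / (K + 1))); first by rewrite lt_min s020 divr_gt0.
move=> s t s0' t0' hs ht.
set r := Num.min _ _ in hs ht.
have rs : r <= s0 / 2 by rewrite ge_min lexx.
have re : r <= e / (K + 1) by rewrite ge_min lexx orbT.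
have r0 : 0 < r by apply: le_lt_trans hs; exact: normr_ge0.
have ms : s0 / 2 <= s.
  have := ler_norm (s0 - s); rewrite distrC => h; lra.
have ms0 : s0 / 2 <= s0 by lra.
have H1 := @kb0_lip _ P B (s0 / 2) s s0 t t0 HB s020 ms ms0.
have H2 := @kb0_lip _ P B (s0 / 2) s0 s t0 t HB s020 ms0 ms.
rewrite (distrC t0 t) (distrC s0 s) in H2.
set a := `|t - t0| in H1 H2 ht *; set b := `|s - s0| in H1 H2 hs *.
have a0 : 0 <= a := normr_ge0 _.
have b0 : 0 <= b := normr_ge0 _.
have H3 : `|s * expR (- t) - s0 * expR (- t0)| <= b + s0 * a.
  have -> : s * expR (- t) - s0 * expR (- t0) =
    (s - s0) * expR (- t) + s0 * (expR (- t) - expR (- t0)) by ring.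
  apply: le_trans (ler_normD _ _) _; rewrite !normrM (gtr0_norm s0p).
  apply: lerD.
    rewrite (ger0_norm (expR_ge0 _)) -[leRHS]mulr1; apply: ler_wpM2l => //.
    by rewrite expR_le1; lra.
  by apply: ler_wpM2l; [exact: ltW|exact: expN_lip].
have hc : b / (s0 / 2) <= 2 * r / s0.
  have -> : 2 * r / s0 = r / (s0 / 2) by field; apply/negP => /eqP h; move: s0p; rewrite h; lra.
  by apply: ler_wpM2r; [rewrite invr_ge0 ltW|exact: ltW].
set c := b / (s0 / 2) in H1 H2 hc.
have hBc : B * c <= B * (2 * r / s0) by apply: ler_wpM2l.
have hBr : B * (2 * r / s0) = 2 * B / s0 * r by field; apply/negP => /eqP h; move: s0p; rewrite h; lra.
have hBa : B * a <= B * r by apply: ler_wpM2l => //; exact: ltW.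
have hsa : s0 * a <= s0 * r by apply: ler_wpM2l; [exact: ltW|exact: ltW].
have hrK : r * (K + 1) <= e by move: re; rewrite ler_pdivlMr.
have hkb : `|kb0 P s t - kb0 P s0 t0| <= B * (a + c).
  rewrite ler_norml; apply/andP; split; lra.
rewrite /kbeta.
have -> : kb0 P s t + s * expR (- t) - (kb0 P s0 t0 + s0 * expR (- t0)) =
  (kb0 P s t - kb0 P s0 t0) + (s * expR (- t) - s0 * expR (- t0)) by ring.
apply: le_lt_trans (ler_normD _ _) _.
rewrite /K in hrK.
nra.
Qed.

Lemma within1 (R : realType) (A : set R) (g : R -> R) :
  (forall x, A x -> forall e, 0 < e -> exists2 r, 0 < r &
     forall y, A y -> `|y - x| < r -> `|g y - g x| < e) ->
  {within A, continuous g}.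
Proof.
move=> H; apply/subspace_continuousP => x Ax.
apply/cvgrPdist_lt => e e0.
have [r r0 Hr] := H x Ax e e0.
rewrite near_withinE; apply/nbhs_ballP; exists r => //= y.
rewrite -ball_normE /= => xy Ay.
by rewrite distrC; apply: Hr => //; rewrite distrC.
Qed.

Lemma within2 (R : realType) (A : set (R * R)) (g : R * R -> R) :
  (forall x, A x -> forall e, 0 < e -> exists2 r, 0 < r &
     forall y, A y -> `|y.1 - x.1| < r -> `|y.2 - x.2| < r -> `|g y - g x| < e) ->
  {within A, continuous g}.
Proof.
move=> H; apply/subspace_continuousP => x Ax.
apply/cvgrPdist_lt => e e0.
have [r r0 Hr] := H x Ax e e0.
rewrite near_withinE; apply/nbhs_ballP; exists r => //= y [b1 b2] Ay.
move: b1 b2; rewrite -!ball_normE /= => b1 b2.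
by rewrite distrC; apply: Hr => //; rewrite distrC.
Qed.

Lemma KL_exists {R : realType} (P : R -> nat -> R -> Prop) (B : R) : kgood P B ->
  (forall e, 0 < e -> exists2 dl, 0 < dl & forall s k d, P s k d -> s <= dl -> d <= e) ->
  (forall e, 0 < e -> exists T : nat, forall s k d, P s k d -> (T <= k)%N -> d <= e) ->
  exists beta : R -> R -> R, [/\ classKL beta,
    (forall s k d, P s k d -> d <= beta s k%:R) &
    (forall e, 0 < e -> exists2 eta, 0 < eta &
       forall s, 0 <= s -> s <= eta -> beta s 0 <= e)].
Proof.
move=> HB Hst Hdec; exists (kbeta P).
have B0 := HB.1.
have Hc := kbeta_cont HB Hst.
split.
- split.
  + apply: within2 => -[s0 t0] /= [s00 t00] e e0.
    have [r r0 Hr] := Hc s0 t0 s00 t00 e e0.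
    by exists r => // -[s t] /= [s0' t0'] hs ht; apply: Hr.
  + move=> t t0; split.
    * by rewrite /kbeta (kb0_s0 _ HB) mul0r addr0.
    * apply: within1 => s0 /= s00 e e0.
      have [r r0 Hr] := Hc s0 t s00 t0 e e0.
      by exists r => // s /= s0' hs; apply: Hr => //; rewrite subrr normr0.
    * move=> s1 s2 s10 s12; rewrite /kbeta.
      have := @kb0_mono_s _ P B s1 s2 t HB s10 (ltW s12).
      have : s1 * expR (- t) < s2 * expR (- t) by rewrite ltr_pM2r ?expR_gt0.
      lra.
  + move=> s s0; split.
    * apply: within1 => t0 /= t00 e e0.
      have [r r0 Hr] := Hc s t0 (ltW s0) t00 e e0.
      by exists r => // t /= t0' ht; apply: Hr => //; [exact: ltW|rewrite subrr normr0].
    * move=> t1 t2 t10 t12; rewrite /kbeta.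
      have := @kb0_mono_t _ P B s t1 t2 HB (ltW s0) (ltW t12).
      have : s * expR (- t2) < s * expR (- t1) by rewrite ltr_pM2l // ltr_expR ltrN2.
      lra.
    * apply/cvgrPdist_lt => e e0.
      have e20 : 0 < e / 2 by rewrite divr_gt0.
      have [M1 HM1] := kb0_large HB Hdec (e / 2) e20.
      exists (Num.max M1 (Num.max (2 * s / e) 0)); split; first by rewrite num_real.
      move=> t; rewrite !gt_max => /andP[hM1 /andP[hM2 ht0]].
      have h1 := HM1 s t (ltW s0) (ltW hM1).
      have h2 : s * expR (- t) < e / 2.
        rewrite expRN ltr_pdivrMr ?expR_gt0 //.
        have hE := expR_ge1Dx t.
        have : 2 * s < t * e by move: hM2; rewrite ltr_pdivrMr.
        nra.
      rewrite sub0r normrN ger0_norm; last exact: (kbeta_ge0 _ _ HB (ltW s0)).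
      rewrite /kbeta; lra.
- move=> s k d Pd; have [s0 d0 dB] := HB.2 _ _ _ Pd.
  rewrite /kbeta.
  have E0 : 0 <= s * expR (- k%:R) by apply: mulr_ge0 => //; exact: expR_ge0.
  have [s0'|sp] : s = 0 \/ 0 < s.
    by case: (boolP (s <= 0)) => h; [left; apply/eqP; rewrite eq_le h s0|right; rewrite ltNge].
    have : d <= 0.
      apply/ler_addgt0Pr => e e0; rewrite add0r; have [dl dl0 Hdl] := Hst e e0.
      by apply: Hdl Pd _; rewrite s0' ltW.
    have := kb0_ge0 s k%:R HB; lra.
  have : kterm s k%:R s k d <= kb0 P s k%:R by apply: (kb0_ge HB); right; exists s, k, d.
  rewrite /kterm divff ?gt_eqF // subrr min_l // ?lexx.
  rewrite (_ : Num.max 0 0 = 0) ?oppr0 ?expR0 ?mulr1; last by rewrite maxxx.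
  lra.
- move=> e e0.
  have e20 : 0 < e / 2 by rewrite divr_gt0.
  have [eta eta0 Heta] := kb0_small HB Hst (e / 2) e20.
  exists (Num.min eta (e / 2)); first by rewrite lt_min eta0 e20.
  move=> s s0; rewrite le_min => /andP[h1 h2].
  rewrite /kbeta oppr0 expR0 mulr1.
  have := Heta s 0 s0 h1; lra.
Qed.
Theorem theorem2 (R : realType) (nx nu nh : nat)
  (f : 'rV[R]_nx -> 'rV[R]_nu -> 'rV[R]_nx)
  (L : 'rV[R]_nx -> 'rV[R]_nu -> \bar R)
  (h : 'rV[R]_nx -> 'rV[R]_nu -> 'rV[R]_nh)
  (gamma : R) (xs : 'rV[R]_nx) (us : 'rV[R]_nu)
  (lam : 'rV[R]_nx -> R) (rho : R -> R)
  (pistar : 'rV[R]_nx -> 'rV[R]_nu) :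
  (* discount factor *)
  0 < gamma < 1 ->
  (* convention: L = +oo outside Z *)
  (forall x u, ~ Zset h (x, u) -> L x u = +oo%E) ->
  (* steady state, normalized *)
  xs = f xs us -> L xs us = 0%E ->
  (* A1 *)
  compact (Zset h) -> compact (X0set f h) ->
  (forall x u, Zset h (x, u) -> L x u \is a fin_num) ->
  (* A2 (SDSD) *)
  {for xs, continuous lam} ->
  (forall A : set 'rV[R]_nx, (exists r : R, forall x, A x -> `|x| <= r) ->
     exists M : R, forall x, A x -> `|lam x| <= M) ->
  lam xs = 0 ->
  classK rho ->
  (forall x u, Zset h (x, u) ->
     ((rho `|x - xs|)%:E <= L x u + (lam x)%:E - (gamma * lam (f x u))%:E)%E) ->
  (forall x u, Zset h (x, u) ->
     ((rho `|x - xs|)%:E <= L x u + (lam x)%:E - (lam (f x u))%:E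
                        + (gamma - 1)%:E * Vstar gamma f h L (f x u))%E) ->
  (* A3 *)
  {for xs, continuous (Vstar gamma f h L)} ->
  (exists M : R, forall x, X0set f h x -> (`|Vstar gamma f h L x| <= M%:E)%E) ->
  (* pistar is an optimal policy *)
  Piset f h pistar ->
  (forall x0, X0set f h x0 -> dcost gamma f L pistar x0 = Vstar gamma f h L x0) ->
  let W := fun x => fine (Vstar gamma f h L x) + lam x in
  [/\ (forall x, X0set f h x -> rho `|x - xs| <= W x),
      (exists alpha : R -> R, classK alpha /\
         forall x, X0set f h x -> W x <= alpha `|x - xs|),
      (forall x, X0set f h x -> W (f x (pistar x)) - W x <= - rho `|x - xs|) &
      (exists beta : R -> R -> R, classKL beta /\
         forall x0 (k : nat), X0set f h x0 ->
           `|traj f pistar x0 k - xs| <= beta `|x0 - xs| k%:R)].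
Proof.
move=> /andP[g0 g1] Hinf Hss HL0 cZ cX0 Hfin clam blam lam0 Krho Hi Hii cV [MV HMV] Hpi Hopt W.
set X0 := X0set f h.
set V := Vstar gamma f h L.
have [rho0 rhoc rhoinc] := Krho.
have rho_ge0 : forall s, 0 <= s -> 0 <= rho s.
  move=> s s0; case: (boolP (s == 0)) => [/eqP ->|sn0]; first by rewrite rho0.
  by rewrite -rho0 ltW // rhoinc // lt_neqAle eq_sym sn0.
have trS : forall x k, traj f pistar x k.+1 = f (traj f pistar x k) (pistar (traj f pistar x k)).
  by move=> x k; rewrite /traj iterS.
have trSr : forall x k, traj f pistar x k.+1 = traj f pistar (f x (pistar x)) k.
  by move=> x k; rewrite /traj iterSr.
have Hstep : forall x, X0 x -> X0 (f x (pistar x)) /\ Zset h (x, pistar x).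
  move=> x Hx; have Hf := Hpi x Hx; split; last exact: (Hf 0%N).
  by exists pistar => k; rewrite -trSr; exact: Hf.
have Htr : forall x k, X0 x -> X0 (traj f pistar x k).
  move=> x k Hx; elim: k => [//|k IH]; rewrite trS; exact: (Hstep _ IH).1.
have Vfin : forall x, X0 x -> V x = (fine (V x))%:E /\ `|fine (V x)| <= MV.
  move=> x Hx; have := HMV x Hx; rewrite /V.
  by case: (Vstar gamma f h L x) => [r| |] //=; rewrite lee_fin.
have Lfin : forall x u, Zset h (x, u) -> L x u = (fine (L x u))%:E.
  by move=> x u Z; rewrite fineK // Hfin.
pose rs y n := \sum_(0 <= k < n) gamma ^+ k *
  fine (L (traj f pistar y k) (pistar (traj f pistar y k))).
have cvR : forall y, X0 y -> rs y @ \oo --> fine (V y).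
  move=> y Hy; have := Hopt y Hy; rewrite /dcost /=.
  set s := (fun n => _ : \bar R).
  have -> : s = fun n => (rs y n)%:E.
    apply/funext => n; rewrite /s /rs -sumEFin; apply: eq_bigr => k _.
    by rewrite EFinM -Lfin //; exact: Hpi y Hy k.
  case: asboolP => hc; last first.
    by move=> h1; have [h2 _] := Vfin y Hy; move: h1; rewrite -/V h2.
  move=> hl; have [h2 _] := Vfin y Hy.
  have : (fun n => (rs y n)%:E) @ \oo --> (fine (V y))%:E.
    by rewrite -h2 /V -hl; exact: hc.
  move/fine_cvg; exact.
pose v x := fine (V x).
pose l x := fine (L x (pistar x)).
have Bell : forall x, X0 x -> v x = l x + gamma * v (f x (pistar x)).
  move=> x Hx; have Hx1 := (Hstep x Hx).1.
  have e : (fun n => rs x n.+1) = fun n => l x + gamma * rs (f x (pistar x)) n.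
    apply/funext => n; rewrite /rs big_nat_recl // mulr_sumr; congr (_ + _).
      by rewrite expr0 mul1r.
    apply: eq_bigr => k _; rewrite trSr exprS -mulrA; congr (_ * _).
  have c1 : (fun n => rs x n.+1) @ \oo --> v x.
    by rewrite (cvg_shiftS (fun n => rs x n)); exact: cvR.
  have c2 : (fun n => l x + gamma * rs (f x (pistar x)) n) @ \oo -->
      l x + gamma * v (f x (pistar x)).
    apply: cvgD; first exact: cvg_cst.
    apply: cvgM; first exact: cvg_cst.
    exact: cvR.
  rewrite e in c1.
  exact: (cvg_unique _ c1 c2).
have ineqs : forall x, X0 x ->
    rho `|x - xs| <= l x + lam x - gamma * lam (f x (pistar x)) /\
    rho `|x - xs| <= l x + lam x - lam (f x (pistar x)) + (gamma - 1) * v (f x (pistar x)).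
  move=> x Hx; have [Hx1 Zx] := Hstep x Hx.
  have hL := Lfin _ _ Zx.
  have [hV _] := Vfin _ Hx1.
  split.
    rewrite -lee_fin EFinB EFinD /l -hL; exact: Hi.
  rewrite -lee_fin EFinD EFinB EFinD EFinM /l /v -hL -hV; exact: Hii.
have WE : forall x, W x = v x + lam x by [].
have Wa : forall x, X0 x -> rho `|x - xs| + gamma * W (f x (pistar x)) <= W x.
  move=> x Hx; have [h1 _] := ineqs x Hx; rewrite !WE (Bell x Hx); lra.
have Wc : forall x, X0 x -> W (f x (pistar x)) - W x <= - rho `|x - xs|.
  move=> x Hx; have [_ h2] := ineqs x Hx; rewrite !WE (Bell x Hx); lra.
have [M0 [M0r HM0]] := compact_bounded cX0.
have X0b : forall x, X0 x -> `|x| <= M0 + 1.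
  by move=> x Hx; apply: (HM0 (M0 + 1)) => //; lra.
have [Ml HMl] := blam X0 (ex_intro _ (M0 + 1) X0b).
set C := `|MV| + `|Ml|.
have WC : forall x, X0 x -> `|W x| <= C.
  move=> x Hx; rewrite WE; apply: le_trans (ler_normD _ _) _.
  by apply: lerD; [exact: le_trans (Vfin x Hx).2 (ler_norm _)|exact: le_trans (HMl x Hx) (ler_norm _)].
have C0 : 0 <= C by apply: addr_ge0; exact: normr_ge0.
have Wlow : forall N x, X0 x -> - (gamma ^+ N * C) <= W x.
  elim => [|N IH] x Hx.
    rewrite expr0 mul1r; have := WC x Hx; rewrite ler_norml => /andP[]; done.
  have [Hx1 _] := Hstep x Hx.
  have h1 := IH _ Hx1; have h2 := Wa x Hx.
  have h3 := rho_ge0 _ (normr_ge0 (x - xs)).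
  rewrite exprS -mulrA; nra.
have W0 : forall x, X0 x -> 0 <= W x.
  move=> x Hx; apply/ler_addgt0Pr => e e0.
  have hc : (fun n => gamma ^+ n * C) @ \oo --> 0.
    rewrite -(mul0r C); apply: cvgM; last exact: cvg_cst.
    by apply: cvg_expr; rewrite ger0_norm // ltW.
  have /cvgrPdist_lt/(_ e e0) := hc; case => N _ HN.
  have := HN N (leqnn N); rewrite sub0r normrN => hN.
  have := Wlow N x Hx; have := ler_norm (gamma ^+ N * C); lra.
have Wa' : forall x, X0 x -> rho `|x - xs| <= W x.
  move=> x Hx; have [Hx1 _] := Hstep x Hx.
  have := Wa x Hx; have := W0 _ Hx1; have := ltW g0; nra.
have Zs : Zset h (xs, us).
  case: (pselect (Zset h (xs, us))) => // hn.
  by have := Hinf _ _ hn; rewrite HL0.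
have trc : forall (pi : 'rV[R]_nx -> 'rV[R]_nu), pi xs = us ->
    forall k, traj f pi xs k = xs.
  move=> pi hpi; elim => [//|k IH].
  by rewrite /traj iterS -/(traj f pi xs k) IH hpi -Hss.
have xsX0 : X0 xs.
  by exists (fun _ => us) => k; rewrite (trc _ erefl k).
pose pi' := fun x => if x == xs then us else pistar x.
have pi'P : Piset f h pi'.
  move=> x0 Hx0.
  have I : forall k, traj f pi' x0 k = xs \/ X0 (traj f pi' x0 k).
    elim => [|k IH]; first by right.
    rewrite /traj iterS -/(traj f pi' x0 k) /pi'.
    case: eqP => [->|hne]; first by left; rewrite -Hss.
    case: IH => // hX; right; exact: (Hstep _ hX).1.
  move=> k; rewrite /pi'; case: eqP => [->//|hne].
  by case: (I k) => // hX; exact: (Hstep _ hX).2.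
have dc0 : dcost gamma f L pi' xs = 0%E.
  rewrite /dcost /=.
  have -> : (fun n => (\sum_(0 <= k < n) ((gamma ^+ k)%:E * L (traj f pi' xs k) (pi' (traj f pi' xs k))))%E) = fun _ => 0%E.
    apply/funext => n; apply: big1 => k _.
    by rewrite (trc pi') /pi' ?eqxx // HL0 mule0.
  case: asboolP => [_|]; first exact: (lim_cst (@ereal_hausdorff R)).
  by move=> hn; exfalso; apply: hn; exact: is_cvg_cst.
have Wxs : W xs <= 0.
  rewrite WE lam0 addr0.
  have : (V xs <= 0)%E by rewrite -dc0; apply: ereal_inf_lbound; exists pi'.
  by rewrite (Vfin xs xsX0).1 lee_fin.
have Wcont : forall e, 0 < e -> exists2 r, 0 < r & forall x, `|x - xs| < r -> W x < e.
  move=> e e0.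
  have cW : (fun x => v x + lam x) @ xs --> W xs.
    have c1 : (fun x => v x) @ xs --> v xs.
      have cV' : V x @[x --> xs] --> (fine (V xs))%:E.
        by rewrite -(Vfin xs xsX0).1; exact: cV.
      exact: (fine_cvg cV').
    exact: (cvgD c1 clam).
  move/cvgrPdist_lt: cW => /(_ e e0); case/nbhs_ballP => r r0 Hr.
  exists r => // x hx.
  have : `|W xs - W x| < e by apply: Hr; rewrite -ball_normE /= distrC.
  rewrite distrC; have := ler_norm (W x - W xs); lra.
pose P1 := fun (s : R) (k : nat) (d : R) =>
  k = 0%N /\ exists x, [/\ X0 x, s = `|x - xs| & d = W x].
have [al [KLa Pa Sa]] : exists al : R -> R -> R, [/\ classKL al,
    (forall s k d, P1 s k d -> d <= al s k%:R) &
    (forall e, 0 < e -> exists2 eta, 0 < eta &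
       forall s, 0 <= s -> s <= eta -> al s 0 <= e)].
  apply: (@KL_exists R P1 C).
  - split=> // s k d [_ [x [Hx -> ->]]]; split; first exact: normr_ge0.
      exact: W0.
    by have := WC x Hx; rewrite ler_norml => /andP[].
  - move=> e e0; have [r r0 Hr] := Wcont e e0.
    exists (r / 2); first by rewrite divr_gt0.
    move=> s k d [_ [x [Hx -> ->]]] hs; apply: ltW; apply: Hr; lra.
  - by move=> e e0; exists 1%N => s k d [-> _].
have [_ Ka _] := KLa.
have alW : forall x, X0 x -> W x <= al `|x - xs| 0.
  move=> x Hx; have := Pa _ 0%N _ (conj erefl (ex_intro _ x (And3 Hx erefl erefl))).
  by rewrite mulr0n.
have Wmono : forall x0 j k, X0 x0 -> (j <= k)%N ->
    W (traj f pistar x0 k) <= W (traj f pistar x0 j).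
  move=> x0 j k Hx0 /subnK <-; elim: (k - j)%N => [|n IH]; first by rewrite add0n.
  rewrite addSn trS; apply: le_trans IH.
  have := Wc _ (Htr x0 (n + j)%N Hx0).
  have := rho_ge0 _ (normr_ge0 (traj f pistar x0 (n + j) - xs)); lra.
pose P2 := fun (s : R) (k : nat) (d : R) =>
  exists x0, [/\ X0 x0, s = `|x0 - xs| & d = `|traj f pistar x0 k - xs|].
have rhoe : forall e, 0 < e -> 0 < rho e.
  by move=> e e0; rewrite -rho0 rhoinc.
have rho_inv : forall d e, 0 <= e -> rho d < rho e -> d <= e.
  move=> d e e0 hr; rewrite leNgt; apply/negP => hd.
  have := rhoinc _ _ e0 hd; lra.
have Hsmall : forall e, 0 < e -> exists2 eta, 0 < eta & forall x0 k, X0 x0 ->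
    `|x0 - xs| <= eta -> `|traj f pistar x0 k - xs| <= e.
  move=> e e0; have re := rhoe e e0.
  have [eta eta0 Heta] := Sa (rho e / 2) (divr_gt0 re (ltr0Sn _ 1)).
  exists eta => // x0 k Hx0 hx0; apply: rho_inv; first exact: ltW.
  have h1 := Wa' _ (Htr x0 k Hx0).
  have h2 := Wmono x0 0%N k Hx0 (leq0n k).
  have h3 := alW x0 Hx0.
  have h4 := Heta _ (normr_ge0 _) hx0.
  rewrite /traj /= in h2; rewrite -/(traj f pistar x0 k) in h1.
  lra.
have Hdec : forall e, 0 < e -> exists T : nat, forall x0 k, X0 x0 -> (T <= k)%N ->
    `|traj f pistar x0 k - xs| <= e.
  move=> e e0; have re := rhoe e e0.
  have [eta eta0 Heta] := Sa (rho e / 2) (divr_gt0 re (ltr0Sn _ 1)).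
  have q0 := rhoe eta eta0; set q := rho eta in q0.
  exists (Num.truncn (C / q)).+1 => x0 k Hx0 hk.
  set N := (Num.truncn (C / q)).+1 in hk.
  have hN : C / q < N%:R by exact: truncnS_gt.
  have [j [jN dj]] : exists j, (j < N)%N /\ `|traj f pistar x0 j - xs| <= eta.
    case: (pselect (exists j, (j < N)%N /\ `|traj f pistar x0 j - xs| <= eta)) => // hn.
    exfalso.
    have hall : forall j, (j < N)%N -> eta < `|traj f pistar x0 j - xs|.
      by move=> j jN; rewrite ltNge; apply/negP => hj; apply: hn; exists j.
    have dec : forall k, (k <= N)%N -> W (traj f pistar x0 k) <= W x0 - k%:R * q.
      elim => [_|k' IH hk']; first by rewrite mul0r subr0.
      have h1 := Wc _ (Htr x0 k' Hx0); rewrite -trS in h1.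
      have h2 := rhoinc _ _ (ltW eta0) (hall k' hk').
      have h3 := IH (ltnW hk').
      rewrite -/q in h2; rewrite mulrSr; lra.
    have h1 := dec N (leqnn N).
    have h2 := W0 _ (Htr x0 N Hx0).
    have h3 : W x0 <= C by have := WC x0 Hx0; rewrite ler_norml => /andP[].
    have : C < N%:R * q by move: hN; rewrite ltr_pdivrMr.
    lra.
  apply: rho_inv; first exact: ltW.
  have h1 := Wa' _ (Htr x0 k Hx0).
  have h2 := Wmono x0 j k Hx0 (ltnW (leq_trans jN hk)).
  have h3 := alW _ (Htr x0 j Hx0).
  have h4 := Heta _ (normr_ge0 _) dj.
  lra.
have [be [KLb Pb _]] : exists be : R -> R -> R, [/\ classKL be,
    (forall s k d, P2 s k d -> d <= be s k%:R) &
    (forall e, 0 < e -> exists2 eta, 0 < eta &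
       forall s, 0 <= s -> s <= eta -> be s 0 <= e)].
  apply: (@KL_exists R P2 (`|M0 + 1| + `|xs|)).
  - split; first by apply: addr_ge0; exact: normr_ge0.
    move=> s k d [x0 [Hx0 -> ->]]; split; try exact: normr_ge0.
    apply: le_trans (ler_normB _ _) _; apply: lerD => //.
    exact: le_trans (X0b _ (Htr x0 k Hx0)) (ler_norm _).
  - move=> e e0; have [eta eta0 Heta] := Hsmall e e0.
    by exists eta => // s k d [x0 [Hx0 -> ->]]; apply: Heta.
  - move=> e e0; have [T HT] := Hdec e e0.
    by exists T => s k d [x0 [Hx0 _ ->]]; apply: HT.
split.
- exact: Wa'.
- exists (fun s => al s 0); split; first exact: (Ka 0 (lexx 0)).
  exact: alW.
- exact: Wc.
- exists be; split => // x0 k Hx0; apply: Pb; by exists x0; split.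
Qed.
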